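(* Let $K$ be a field of prime characteristic $p$ and $C$ a cyclic $p$-group of order $q$. For each integer $n\ge0$, $\Lambda^n(V_q)\in P_{KC}$, and $\alpha_1(\Lambda^n(V_q))=1$ if $n=0$ or $n=q$, and $\alpha_1(\Lambda^n(V_q))=0$ otherwise.
   Context: The indecomposable $KC$-modules up to isomorphism are $V_1,\dots,V_q$ with $\dim V_r=r$ ($V_q$ is the regular module); $R_{KC}$ is the Green ring with $\mathbb{Z}$-basis $V_1,\dots,V_q$ (addition from direct sum, multiplication from tensor product). $\Lambda^n$ is the $n$th exterior power. $P_{KC}$ is the $\mathbb{Z}$-span in $R_{KC}$ of all permutation modules for $C$ over $K$. For $A=\sum_i\alpha_i(A)V_i$, $\alpha_1(A)$ is the coefficient of $V_1$. *)

(* Defs.v *)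
From HB Require Import structures.
From mathcomp Require Import all_boot all_order all_algebra all_fingroup all_solvable.
From mathcomp Require Import mxrepresentation pgroup cyclic.
Set Implicit Arguments. Unset Strict Implicit. Unset Printing Implicit Defensive.
Import GRing.Theory.
Local Open Scope ring_scope.

(* Modules for a finite group C over a field K are given concretely as
   matrix families  x |-> f x : 'M[K]_d  (row-vector convention of MathComp,
   as in mxrepresentation).  Only the values at x \in C matter. *)
Section KCModules.
Variables (K : fieldType) (gT : finGroupType) (C : {group gT}).

Definition fam (d : nat) := gT -> 'M[K]_d.

Definition fam_iso d1 d2 (f1 : fam d1) (f2 : fam d2) : Prop :=
  exists2 B : 'M[K]_(d1, d2), row_free B && row_full B &
    forall x, x \in C -> f1 x *m B = B *m f2 x.

Definition fam_add d1 d2 (f1 : fam d1) (f2 : fam d2) : fam (d1 + d2) :=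
  fun x => block_mx (f1 x) 0 0 (f2 x).

Definition indecomposable d (f : fam d) : Prop :=
  (0 < d)%N /\
  ~ exists d1 d2 (f1 : fam d1.+1) (f2 : fam d2.+1), fam_iso f (fam_add f1 f2).

Definition Mod := {d : nat & fam d}.

Fixpoint mod_sum (s : seq Mod) : Mod :=
  match s with
  | [::] => existT _ 0%N (fun _ => 0)
  | m :: s' => existT _ (projT1 m + projT1 (mod_sum s'))%N
                 (fam_add (projT2 m) (projT2 (mod_sum s')))
  end.

Definition is_decomposition d (f : fam d) (s : seq Mod) : Prop :=
  foldr (fun m P => indecomposable (projT2 m) /\ P) True s /\
  fam_iso f (projT2 (mod_sum s)).

(* number of summands isomorphic to V_1 (the unique 1-dimensional
   indecomposable KC-module, C a p-group in characteristic p) *)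
Definition count_V1 (s : seq Mod) : nat := count (fun m => projT1 m == 1%N) s.

Definition perm_module d (f : fam d) : Prop :=
  exists s : gT -> {perm 'I_d},
    (forall x y, x \in C -> y \in C -> s (x * y)%g = (s x * s y)%g) /\
    (forall x, x \in C -> f x = perm_mx (s x)).

(* the (class of the) module f lies in P_KC, the Z-span in the Green ring of
   the permutation modules: [f] = [P1] - [P2] with P1, P2 permutation modules,
   i.e. f (+) P2 ~= P1 *)
Definition in_PKC d (f : fam d) : Prop :=
  exists d1 d2 (P1 : fam d1) (P2 : fam d2),
    [/\ perm_module P1, perm_module P2 & fam_iso (fam_add f P2) P1].

End KCModules.

(* exterior powers, via compound matrices: the basis of Lambda^n(K^d) is
   indexed by n-subsets S of 'I_d (e_S = wedge of e_i, i in S increasing),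
   and the (S,T) entry of Lambda^n(A) is the minor det A[S,T]. *)
Section Exterior.
Variables (K : fieldType) (d n : nat).

Definition ksub := {S : {set 'I_d} | #|S| == n}.

Definition ksub_fun (S : ksub) : 'I_n -> 'I_d :=
  fun k => @enum_val _ (mem (val S)) (cast_ord (esym (eqP (valP S))) k).

Definition ext_mx (A : 'M[K]_d) : 'M[K]_#|{: ksub}| :=
  \matrix_(i, j) \det (\matrix_(a < n, b < n)
      A (ksub_fun (enum_val i) a) (ksub_fun (enum_val j) b)).

End Exterior.

Definition ext_fam (K : fieldType) (gT : finGroupType) d n (f : fam K gT d)
  : fam K gT #|{: ksub d n}| := fun x => ext_mx n (f x).

(* Main.v *)
Require Import Defs.
From HB Require Import structures.
From mathcomp Require Import all_boot all_order all_algebra all_fingroup all_solvable.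
From mathcomp Require Import mxrepresentation pgroup cyclic zify.
From Stdlib Require Import Classical.
Set Implicit Arguments. Unset Strict Implicit. Unset Printing Implicit Defensive.
Import GRing.Theory.
Local Open Scope ring_scope.


Section Gen.
Variables (K : fieldType) (gT : finGroupType) (C : {group gT}).

Definition isoI d1 d2 (f1 : fam K gT d1) (f2 : fam K gT d2) : Prop :=
  exists B : 'M[K]_(d1, d2), exists B' : 'M[K]_(d2, d1),
    [/\ B *m B' = 1%:M, B' *m B = 1%:M & forall x, x \in C -> f1 x *m B = B *m f2 x].

Lemma inv_rank d1 d2 (B : 'M[K]_(d1, d2)) (B' : 'M[K]_(d2, d1)) :
  B *m B' = 1%:M -> B' *m B = 1%:M -> \rank B = d1 /\ \rank B = d2.
Proof.
move=> h1 h2; split; apply/eqP; rewrite eqn_leq.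
  rewrite rank_leq_row /=; have := mxrankM_maxl B B'; by rewrite h1 mxrank1.
rewrite rank_leq_col /=; have := mxrankM_maxr B' B; by rewrite h2 mxrank1.
Qed.

Lemma isoIP d1 d2 (f1 : fam K gT d1) (f2 : fam K gT d2) :
  fam_iso C f1 f2 <-> isoI f1 f2.
Proof.
split.
  case=> B /andP[fr fu] hB; exists B, (pinvmx B).
  have h2 : pinvmx B *m B = 1%:M.
    by rewrite -{1}(mul1mx (pinvmx B)) mulmxKpV // sub1mx.
  split=> //; apply: (row_free_inj fr); by rewrite -mulmxA h2 mul1mx mulmx1.
case=> B [B' [h1 h2 h3]]; exists B => //.
by have [r1 r2] := inv_rank h1 h2; rewrite /row_free /row_full; apply/andP; split; apply/eqP.
Qed.

Lemma isoI_refl d (f : fam K gT d) : isoI f f.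
Proof. by exists 1%:M, 1%:M; split; rewrite ?mulmx1 // => x _; rewrite mul1mx mulmx1. Qed.

Lemma isoI_sym d1 d2 (f1 : fam K gT d1) (f2 : fam K gT d2) : isoI f1 f2 -> isoI f2 f1.
Proof.
case=> B [B' [h1 h2 h3]]; exists B', B; split=> // x Cx.
by rewrite -[LHS]mul1mx -h2 -mulmxA (mulmxA B) -h3 // -mulmxA h1 mulmx1.
Qed.

Lemma isoI_trans d1 d2 d3 (f1 : fam K gT d1) (f2 : fam K gT d2) (f3 : fam K gT d3) :
  isoI f1 f2 -> isoI f2 f3 -> isoI f1 f3.
Proof.
case=> B [B' [h1 h2 h3]] [E [E' [e1 e2 e3]]]; exists (B *m E), (E' *m B'); split.
- by rewrite mulmxA -(mulmxA B) e1 mulmx1 h1.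
- by rewrite mulmxA -(mulmxA E') h2 mulmx1 e2.
- by move=> x Cx; rewrite mulmxA h3 // -mulmxA e3 // mulmxA.
Qed.

Lemma isoI_add d1 d2 e1 e2 (f1 : fam K gT d1) (f2 : fam K gT d2)
   (g1 : fam K gT e1) (g2 : fam K gT e2) :
  isoI f1 g1 -> isoI f2 g2 -> isoI (fam_add f1 f2) (fam_add g1 g2).
Proof.
case=> B [B' [h1 h2 h3]] [E [E' [k1 k2 k3]]].
exists (block_mx B 0 0 E), (block_mx B' 0 0 E'); split.
- by rewrite mulmx_block !mulmx0 !mul0mx !addr0 !add0r h1 k1 -scalar_mx_block.
- by rewrite mulmx_block !mulmx0 !mul0mx !addr0 !add0r h2 k2 -scalar_mx_block.
- move=> x Cx; rewrite /fam_add !mulmx_block !mulmx0 !mul0mx !addr0 !add0r.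
  by rewrite h3 // k3.
Qed.

Lemma isoI_add0 d (f : fam K gT d) (z : fam K gT 0) : isoI f (fam_add f z).
Proof.
exists (row_mx 1%:M 0), (col_mx 1%:M 0); split.
- by rewrite mul_row_col mulmx0 addr0 mulmx1.
- rewrite mul_col_mx mul1mx mul0mx scalar_mx_block.
  by rewrite /block_mx; f_equal; apply/matrixP => -[].
- move=> x Cx; rewrite /fam_add mul_row_block !mulmx0 !mul0mx !addr0 mul1mx.
  by rewrite mul_mx_row mulmx1 mulmx0.
Qed.

Lemma isoI_assoc a b c (fa : fam K gT a) (fb : fam K gT b) (fc : fam K gT c) :
  isoI (fam_add (fam_add fa fb) fc) (fam_add fa (fam_add fb fc)).
Proof.
pose B : 'M[K]_(a + b + c, a + (b + c)) :=
  col_mx (col_mx (row_mx 1%:M 0) (row_mx 0 (row_mx 1%:M 0))) (row_mx 0 (row_mx 0 1%:M)).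
pose B' : 'M[K]_(a + (b + c), a + b + c) :=
  col_mx (row_mx (row_mx 1%:M 0) 0) (col_mx (row_mx (row_mx 0 1%:M) 0) (row_mx 0 1%:M)).
exists B, B'; split.
- rewrite /B /B' !mul_col_mx !mul_row_col !mul0mx !mul1mx !add0r !addr0.
  rewrite [RHS]scalar_mx_block [X in block_mx X _ _ _]scalar_mx_block /block_mx; congr col_mx.
  rewrite (_ : (0 : 'M[K]_(a + b, c)) = col_mx 0 0); last by rewrite col_mx0.
  by rewrite -block_mxEh.
- rewrite /B /B' !mul_col_mx !mul_row_col !mul0mx !mul1mx !add0r !addr0.
  rewrite [RHS]scalar_mx_block [X in block_mx _ _ _ X]scalar_mx_block /block_mx; congr col_mx.
  rewrite (_ : (0 : 'M[K]_(b + c, a)) = col_mx 0 0); last by rewrite col_mx0.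
  by rewrite -block_mxEh.
- move=> x Cx; rewrite /fam_add /B.
  rewrite !mul_block_col !mul0mx !addr0 !add0r !mul_col_mx.
  rewrite !mul_mx_row !mulmx0 !mulmx1 !mul_row_block !mul0mx !mulmx0 !mul1mx !addr0 !add0r.
  by [].
Qed.


Definition indecs (s : seq (Mod K gT)) : Prop :=
  foldr (fun m P => indecomposable C (projT2 m) /\ P) True s.

Lemma indecs_cat s t : indecs (s ++ t) <-> indecs s /\ indecs t.
Proof. elim: s => [|m s IH] /=; first by tauto. by rewrite IH; tauto. Qed.

Notation Sig t := (projT2 (mod_sum t)).

Lemma isoI_0add e (z : fam K gT 0) (f : fam K gT e) : isoI (fam_add z f) f.
Proof.
exists (col_mx 0 1%:M), (row_mx 0 1%:M); split.
- rewrite mul_col_mx mul0mx mul1mx [RHS]scalar_mx_block.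
  by rewrite /block_mx; f_equal; apply/matrixP => -[].
- by rewrite mul_row_col mulmx0 add0r mulmx1.
- move=> x Cx; rewrite /fam_add mul_block_col !mulmx0 !mul0mx !addr0 !add0r mulmx1.
  by rewrite mul_col_mx mul0mx mul1mx.
Qed.

Lemma decomp_aux n : forall d, (d <= n)%N -> forall f : fam K gT d,
  exists s, indecs s /\ forall t, isoI (fam_add f (Sig t)) (Sig (s ++ t)).
Proof.
elim: n => [|n IH] d hd f.
  move: f; rewrite (_ : d = 0%N); last by lia.
  by move=> f; exists [::]; split=> // t; apply: isoI_0add.
case: (classic (indecomposable C f)) => hind.
  exists [:: existT _ d f]; split=> //= t; exact: isoI_refl.
case: (posnP d) => [d0|dpos].
  move: f hind; rewrite d0 => f _.
  by exists [::]; split=> // t; apply: isoI_0add.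
have [d1 [d2 [f1 [f2 hiso]]]] : exists d1 d2 (f1 : fam K gT d1.+1) (f2 : fam K gT d2.+1),
    fam_iso C f (fam_add f1 f2).
  by apply: NNPP => hne; apply: hind; split.
move/isoIP: hiso => hiso.
have hdim : d = (d1.+1 + d2.+1)%N.
  by case: hiso => B [B' [h1 h2 _]]; have [-> ->] := inv_rank h1 h2.
have [s1 [i1 h1]] := IH d1.+1 ltac:(lia) f1.
have [s2 [i2 h2]] := IH d2.+1 ltac:(lia) f2.
exists (s1 ++ s2); split; first by apply/indecs_cat.
move=> t; rewrite -catA.
apply: isoI_trans (isoI_add hiso (isoI_refl (Sig t))) _.
apply: isoI_trans (isoI_assoc _ _ _) _.
apply: isoI_trans (isoI_add (isoI_refl f1) (h2 t)) _.
exact: h1.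
Qed.

Lemma decomp_exists d (f : fam K gT d) : exists s, is_decomposition C f s.
Proof.
have [s [i h]] := decomp_aux (leqnn d) f.
exists s; split; first exact: i.
apply/isoIP; apply: isoI_trans (isoI_add0 f (Sig [::])) _.
by have := h [::]; rewrite cats0.
Qed.

End Gen.


Section Phi.
Variables (K : fieldType) (gT : finGroupType) (C : {group gT}) (g : gT) (q : nat).
Hypothesis Cg : g \in C.
Hypothesis hq : [pchar K].-nat q.
Hypothesis q0 : (0 < q)%N.

Definition Nm d (f : fam K gT d) : 'M[K]_d := f g - 1%:M.
Definition phi d (f : fam K gT d) : int :=
  (d%:Z - 2 * (\rank (Nm f))%:Z + (\rank (Nm f *m Nm f))%:Z)%R.
Definition Good d (f : fam K gT d) : Prop :=
  (forall x, x \in C -> exists k, f x = f g ^+ k) /\ f g ^+ q = 1.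

Lemma conj_rank d1 d2 (B : 'M[K]_(d1, d2)) (B' : 'M[K]_(d2, d1)) (X : 'M[K]_d2) :
  B *m B' = 1%:M -> B' *m B = 1%:M -> \rank (B *m X *m B') = \rank X.
Proof.
move=> h1 h2; have [r1 r2] := inv_rank h1 h2; have [r1' r2'] := inv_rank h2 h1.
rewrite mxrankMfree; last by rewrite /row_free r1'.
apply/eqmx_rank/eqmxP/eqmxMfull; by rewrite /row_full r2.
Qed.

Lemma iso_conj d1 d2 (f : fam K gT d1) (h : fam K gT d2) (B : 'M[K]_(d1, d2)) B' :
  B *m B' = 1%:M -> (forall x, x \in C -> f x *m B = B *m h x) ->
  forall x, x \in C -> f x = B *m h x *m B'.
Proof. by move=> h1 h3 x Cx; rewrite -h3 // -mulmxA h1 mulmx1. Qed.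

Lemma phi_iso d1 d2 (f : fam K gT d1) (h : fam K gT d2) : isoI C f h -> phi f = phi h.
Proof.
case=> B [B' [h1 h2 h3]].
have [r1 r2] := inv_rank h1 h2.
have eN : Nm f = B *m Nm h *m B'.
  by rewrite /Nm (iso_conj h1 h3 Cg) mulmxBr mulmxBl mulmx1 h1.
have eN2 : Nm f *m Nm f = B *m (Nm h *m Nm h) *m B'.
  by rewrite eN !mulmxA -(mulmxA _ B') h2 mulmx1.
rewrite /phi eN2 eN !conj_rank //; congr (_ - _ + _); congr Posz; by rewrite -r1 r2.
Qed.

Lemma phi_add d1 d2 (f1 : fam K gT d1) (f2 : fam K gT d2) :
  phi (fam_add f1 f2) = phi f1 + phi f2.
Proof.
have eN : Nm (fam_add f1 f2) = block_mx (Nm f1) 0 0 (Nm f2).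
  by rewrite /Nm /fam_add [1%:M]scalar_mx_block opp_block_mx add_block_mx !subr0.
rewrite /phi eN mulmx_block !mulmx0 !mul0mx !addr0 !add0r !rank_diag_block_mx.
rewrite !PoszD; lia.
Qed.

Lemma conj_exp d1 d2 (B : 'M[K]_(d1, d2)) (B' : 'M[K]_(d2, d1)) (X : 'M[K]_d2) k :
  B *m B' = 1%:M -> B' *m B = 1%:M -> (B *m X *m B') ^+ k = B *m X ^+ k *m B'.
Proof.
move=> h1 h2; elim: k => [|k IH]; first by rewrite !expr0 mulmx1 h1.
rewrite exprS IH -mulmxE !mulmxA -(mulmxA _ B') h2 mulmx1.
by rewrite -!mulmxA (mulmxA X) mulmxE -exprS.
Qed.

Lemma Good_iso d1 d2 (f : fam K gT d1) (h : fam K gT d2) :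
  isoI C f h -> Good h -> Good f.
Proof.
case=> B [B' [h1 h2 h3]] [G1 G2]; have ec := iso_conj h1 h3.
split; last by rewrite ec // conj_exp // G2 mulmx1 h1.
move=> x Cx; have [k hk] := G1 x Cx; exists k.
by rewrite ec // ec // conj_exp // hk.
Qed.

Lemma block_exp d1 d2 (A : 'M[K]_d1) (D : 'M[K]_d2) k :
  (block_mx A 0 0 D) ^+ k = block_mx (A ^+ k) 0 0 (D ^+ k).
Proof.
elim: k => [|k IH]; first by rewrite !expr0; exact: scalar_mx_block.
by rewrite !exprS IH -!mulmxE mulmx_block !mulmx0 !mul0mx !addr0 !add0r.
Qed.

Lemma Good_add d1 d2 (f1 : fam K gT d1) (f2 : fam K gT d2) :
  Good (fam_add f1 f2) -> Good f1 /\ Good f2.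
Proof.
have e : (1 : 'M[K]_(d1 + d2)) = block_mx 1 0 0 1 by exact: scalar_mx_block.
case=> G1; rewrite /fam_add block_exp e => /eq_block_mx[e1 _ _ e2].
split; split=> // x Cx; have [k] := G1 x Cx; rewrite block_exp => /eq_block_mx[u1 _ _ u2];
  by exists k.
Qed.

Definition count1 (s : seq (Mod K gT)) := count_V1 s.


Lemma exists_base (r m n : nat) (X : 'M[K]_(m, n)) :
  \rank X = r -> exists H : 'M[K]_(r, n), (H :=: X)%MS.
Proof. by move=> <-; exists (row_base X); exact: eq_row_base. Qed.

Lemma split_lemma d' (f : fam K gT d'.+2) :
  (forall x, x \in C -> exists k, f x = f g ^+ k) ->
  forall v : 'rV[K]_(d'.+2), v *m Nm f = 0 -> ~~ (v <= Nm f)%MS ->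
  exists f2 : fam K gT d'.+1, isoI C f (fam_add (fun _ => 1%:M : 'M[K]_1) f2).
Proof.
move=> G1 v vN vnN.
set N := Nm f; set M := f g.
have eM : M = N + 1%:M by rewrite /N /Nm subrK.
pose A := (N + v)%MS.
pose H0 := (N + (A^C)%MS)%MS.
have v0 : v != 0 by apply: contraNneq vnN => ->; rewrite sub0mx.
have rv : \rank v = 1%N by rewrite rank_rV v0.
have rA : \rank A = (\rank N).+1.
  have := mxrank_sum_cap N v; rewrite rv -/A.
  have := mxrank_leqif_sup (addsmxSl N v); rewrite -/A => -[le1 eq1].
  have : \rank A != \rank N.
    rewrite eq_sym eq1; apply: contra vnN => AN.
    by apply: submx_trans AN; apply: addsmxSr.
  lia.
have cap0 : \rank (N :&: (A^C)%MS)%MS = 0%N.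
  apply/eqP; rewrite mxrank_eq0 -submx0 -(capmx_compl A).
  by apply: capmxS => //; apply: addsmxSl.
have rH0 : \rank H0 = d'.+1.
  have := mxrank_sum_cap N (A^C)%MS; rewrite cap0 mxrank_compl rA -/H0.
  have := rank_leq_col A; rewrite rA; lia.
have [H eH] := exists_base rH0.
have NH : (N <= H)%MS by rewrite eH; apply: addsmxSl.
have fullvH : row_full (v + H)%MS.
  have h1 : (1%:M <= A + (A^C)%MS)%MS by rewrite sub1mx addsmx_compl_full.
  rewrite -sub1mx; apply: submx_trans h1 _.
  rewrite addsmx_sub; apply/andP; split.
    rewrite addsmx_sub (submx_trans NH (addsmxSr _ _)) /=; exact: addsmxSl.
  apply: submx_trans (addsmxSr v H); rewrite eH; exact: addsmxSr.
pose W : 'M[K]_(d'.+2) := col_mx v H.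
have Wu : W \in unitmx.
  rewrite -row_free_unit /row_free; apply/eqP.
  move: fullvH; rewrite /row_full => /eqP hr.
  rewrite -[X in _ = X]hr; apply/eqmx_rank/eqmxP; exact: eqmx_sym (addsmxE v H).
have vM : forall k, v *m M ^+ k = v.
  elim=> [|k IH]; first by rewrite expr0 mulmx1.
  by rewrite exprSr -mulmxE mulmxA IH eM mulmxDr vN add0r mulmx1.
have HM : forall k, (H *m M ^+ k <= H)%MS.
  elim=> [|k IH]; first by rewrite expr0 mulmx1.
  rewrite exprSr -mulmxE mulmxA; apply: submx_trans (submxMr _ IH) _.
  rewrite eM mulmxDr mulmx1; apply: addmx_sub => //.
  exact: submx_trans (submxMl _ _) NH.
exists (fun x => H *m f x *m pinvmx H).
exists (invmx W), W; split; [exact: mulVmx | exact: mulmxV | ].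
move=> x Cx; have [k ek] := G1 x Cx.
have e1 : W *m f x = fam_add (fun _ => 1%:M : 'M[K]_1) (fun x => H *m f x *m pinvmx H) x *m W.
  rewrite /fam_add /W /= !mul_col_mx !mul_row_col !mul0mx mul1mx !addr0 add0r.
  rewrite (mul_col_mx v H) mulmxKpV; last by rewrite ek HM.
  by rewrite ek vM.
rewrite -[LHS]mul1mx -(mulVmx Wu) -(mulmxA (invmx W)).
by rewrite (mulmxA W) e1 -!mulmxA (mulmxV Wu) mulmx1.
Qed.


Lemma phi_ker0 d (f : fam K gT d) : (kermx (Nm f) <= Nm f)%MS -> phi f = 0.
Proof.
move=> kN; have h := mxrank_mul_ker (Nm f) (Nm f).
rewrite (eqmx_rank (introT eqmxP (capmx_idPr kN))) mxrank_ker in h.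
have := rank_leq_row (Nm f).
rewrite /phi; lia.
Qed.

Lemma phi_big d' (f : fam K gT d'.+2) : indecomposable C f -> Good f -> phi f = 0.
Proof.
move=> [_ hind] [G1 G2].
have kN : (kermx (Nm f) <= Nm f)%MS.
  apply: contraT => /row_subPn[i hi]; exfalso.
  have vN : row i (kermx (Nm f)) *m Nm f = 0 by rewrite -row_mul mulmx_ker row0.
  have [f2 hf2] := split_lemma G1 vN hi.
  by apply: hind; exists 0%N, d', (fun _ => 1%:M), f2; apply/isoIP.
have h := mxrank_mul_ker (Nm f) (Nm f).
rewrite (eqmx_rank (introT eqmxP (capmx_idPr kN))) mxrank_ker in h.
have := rank_leq_row (Nm f).
rewrite /phi; lia.
Qed.


Lemma root1q (a : K) : a ^+ q = 1 -> a = 1.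
Proof.
move=> ha.
have m1 : (-1 : K) ^+ q = -1.
  have h := exprDn_pchar 1 (-1) hq.
  have qn : (q == 0%N) = false by apply/negbTE; rewrite -lt0n.
  rewrite subrr expr0n expr1n qn /= in h.
  by apply: (addrI 1); rewrite -h subrr.
have := exprDn_pchar a (-1) hq; rewrite ha m1 subrr => /eqP.
by rewrite expf_eq0 subr_eq0 => /andP[_ /eqP].
Qed.

Lemma exp11 (M : 'M[K]_1) k : (M ^+ k) 0 0 = (M 0 0) ^+ k.
Proof.
elim: k => [|k IH]; first by rewrite !expr0 mxE.
by rewrite !exprS -mulmxE mxE big_ord1 IH.
Qed.

Lemma phi1 (f : fam K gT 1) : Good f -> phi f = 1.
Proof.
move=> [_ G2]; have : (f g 0 0) ^+ q = 1 by rewrite -exp11 G2 mxE.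
move/root1q => e; rewrite /phi.
have -> : Nm f = 0 by apply/matrixP => i j; rewrite !ord1 !mxE e subrr.
by rewrite mul0mx mxrank0.
Qed.

Lemma indec_phi d (f : fam K gT d) : indecomposable C f -> Good f -> phi f = (d == 1%N)%:Z.
Proof.
case: d f => [|[|d']] f hi hG; first by case: hi.
  exact: phi1.
exact: phi_big.
Qed.

Notation Sig t := (projT2 (mod_sum t)).

Lemma phi_sum (s : seq (Mod K gT)) : indecs C s -> Good (Sig s) -> phi (Sig s) = (count_V1 s)%:Z.
Proof.
elim: s => [|m s IH] /=.
  move=> _ _; rewrite /phi /=; set X := Nm _.
  have := rank_leq_row X; have := rank_leq_row (X *m X); lia.
move=> [hm hs] hG; have [G1 G2] := Good_add hG.
by rewrite phi_add IH // indec_phi // /count_V1 /= PoszD.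
Qed.

End Phi.


Section Conc.
Variables (K : fieldType) (gT : finGroupType) (C : {group gT}) (n : nat).

Definition Rr x : 'M[K]_#|C| := regular_repr K C x.
Definition mulC x := if x \in C then x else 1%g.
Lemma mulC_in x : mulC x \in C.
Proof. by rewrite /mulC; case: ifP. Qed.
Definition rhof x (i : 'I_#|C|) : 'I_#|C| := gring_index C (enum_val i * mulC x)%g.
Lemma rhof_inj x : injective (rhof x).
Proof.
move=> i j; rewrite /rhof => /(can_in_inj (@gring_indexK _ C)).
by move=> /(_ (groupM (enum_valP i) (mulC_in x)) (groupM (enum_valP j) (mulC_in x)))
  /mulIg /enum_val_inj.
Qed.
Definition rho x : {perm 'I_#|C|} := perm (@rhof_inj x).
Lemma rhoE x i : x \in C -> rho x i = gring_index C (enum_val i * x)%g.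
Proof. by move=> Cx; rewrite permE /rhof /mulC Cx. Qed.
Lemma rhoM x y : x \in C -> y \in C -> rho (x * y)%g = (rho x * rho y)%g.
Proof.
move=> Cx Cy; apply/permP => i; rewrite permM !rhoE ?groupM //.
by rewrite gring_indexK ?mulgA // groupM // enum_valP.
Qed.
Lemma rho1 : rho 1%g = 1%g.
Proof. by apply/permP => i; rewrite rhoE // perm1 mulg1 gring_valK. Qed.

Lemma RrE x i j : x \in C -> Rr x i j = (j == rho x i)%:R.
Proof. by move=> Cx; rewrite /Rr /= !mxE rhoE // eqxx. Qed.


Local Notation KS := (ksub #|C| n).
Local Notation ks := (@ksub_fun #|C| n).

Lemma ks_in (S : KS) a : ks S a \in val S.
Proof. exact: enum_valP. Qed.

Lemma ks_inj (S : KS) : injective (ks S).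
Proof. by move=> a b /enum_val_inj /cast_ord_inj. Qed.

Lemma ks_surj (S : KS) k : k \in val S -> exists a, ks S a = k.
Proof.
move=> kS; exists (cast_ord (eqP (valP S)) (enum_rank_in kS k)).
by rewrite /ksub_fun cast_ordK enum_rankK_in.
Qed.

Lemma sum_cast m m' (e : m' = m) (G : 'I_m' -> K) :
  \sum_(b < m) G (cast_ord (esym e) b) = \sum_(i < m') G i.
Proof. by case: m / e; apply: eq_bigr => b _; rewrite cast_ord_id. Qed.

Lemma sum_ks (S : KS) (F : 'I_#|C| -> K) :
  \sum_(b < n) F (ks S b) = \sum_(k in val S) F k.
Proof. rewrite [RHS]big_enum_val; exact: (sum_cast (eqP (valP S)) (fun i => F (enum_val i))). Qed.


Lemma sig_card x (S : KS) : #|[set rho x i | i in val S]| == n.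
Proof. by rewrite card_imset ?(valP S) //; exact: perm_inj. Qed.
Definition sigf x (S : KS) : KS := exist (fun A : {set 'I_#|C|} => #|A| == n) _ (sig_card x S).
Lemma sigf_inj x : injective (sigf x).
Proof. by move=> S T [] /(imset_inj (@perm_inj _ (rho x))) /val_inj. Qed.
Definition tauf x (i : 'I_#|{: KS}|) := enum_rank (sigf x (enum_val i)).
Lemma tauf_inj x : injective (tauf x).
Proof. by move=> i j /enum_rank_inj /sigf_inj /enum_val_inj. Qed.
Definition tau x : {perm 'I_#|{: KS}|} := perm (@tauf_inj x).
Lemma tauE x i : enum_val (tau x i) = sigf x (enum_val i).
Proof. by rewrite permE /tauf enum_rankK. Qed.

Lemma sigfM x y S : x \in C -> y \in C -> sigf (x * y)%g S = sigf y (sigf x S).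
Proof.
move=> Cx Cy; apply: val_inj => /=; rewrite rhoM // -imset_comp.
by apply: eq_imset => i; rewrite permM.
Qed.
Lemma sigf1 S : sigf 1%g S = S.
Proof.
apply: val_inj => /=; rewrite rho1 -[RHS]imset_id.
by apply: eq_imset => i; rewrite perm1.
Qed.
Lemma tauM x y : x \in C -> y \in C -> tau (x * y)%g = (tau x * tau y)%g.
Proof.
move=> Cx Cy; apply/permP => i; rewrite permM; apply: enum_val_inj.
by rewrite !tauE sigfM.
Qed.
Lemma tau1 : tau 1%g = 1%g.
Proof. by apply/permP => i; rewrite perm1; apply: enum_val_inj; rewrite tauE sigf1. Qed.

Definition minor (A : 'M[K]_#|C|) (S T : KS) : 'M[K]_n :=
  \matrix_(a < n, b < n) A (ks S a) (ks T b).
Definition eps x (S : KS) := \det (minor (Rr x) S (sigf x S)).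

Lemma L_entry x i j : x \in C ->
  ext_mx n (Rr x) i j = (tau x i == j)%:R * eps x (enum_val i).
Proof.
move=> Cx; rewrite /ext_mx mxE; case: eqP => [<-|ne].
  by rewrite mul1r tauE.
rewrite mul0r.
set S := enum_val i; set T := enum_val j.
have [a ha] : exists a, rho x (ks S a) \notin val T.
  apply: NNPP => hn; apply: ne; apply: enum_val_inj; rewrite tauE.
  apply: val_inj => /=; apply/eqP; rewrite eqEcard; apply/andP; split.
    apply/subsetP => k /imsetP[k' k'S ->]; have [a <-] := ks_surj k'S.
    by apply: NNPP => hk; apply: hn; exists a; apply/negP.
  by rewrite card_imset ?(eqP (valP S)) ?(eqP (valP T)) //; exact: perm_inj.
rewrite (expand_det_row _ a) big1 // => b _; rewrite mxE RrE //.
case: eqP => [e|]; last by rewrite mul0r.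
by move: (ks_in T b); rewrite e (negbTE ha).
Qed.


Lemma minorM (A B : 'M[K]_#|C|) (S T U : KS) :
  (forall a k, k \notin val T -> A (ks S a) k = 0) ->
  minor (A *m B) S U = minor A S T *m minor B T U.
Proof.
move=> hA; apply/matrixP => a c; rewrite !mxE.
under [RHS]eq_bigr => b _ do rewrite !mxE.
transitivity (\sum_(k in val T) A (ks S a) k * B k (ks U c)).
  rewrite (bigID (fun k => k \in val T)) /= [X in _ + X]big1 ?addr0 // => k hk.
  by rewrite hA // mul0r.
by symmetry; exact: (sum_ks T (fun k => A (ks S a) k * B k (ks U c))).
Qed.

Lemma eps_cocycle x y S : x \in C -> y \in C ->
  eps (x * y)%g S = eps x S * eps y (sigf x S).
Proof.
move=> Cx Cy; rewrite /eps sigfM // /Rr repr_mxM // (@minorM _ _ S (sigf x S)) ?det_mulmx //.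
move=> a k hk; rewrite RrE //; case: eqP => // ek; move: hk; rewrite ek /=.
by rewrite imset_f // ks_in.
Qed.

Lemma eps1 S : eps 1%g S = 1.
Proof.
rewrite /eps sigf1 /Rr repr_mx1 -[RHS](det1 K n); congr (\det _).
by apply/matrixP => a b; rewrite !mxE (inj_eq (@ks_inj S)).
Qed.

Lemma eps_unit x S : x \in C -> eps x S != 0.
Proof.
move=> Cx; have := eps_cocycle S Cx (groupVr Cx); rewrite mulgV eps1 => h.
by apply/eqP => e; move: h; rewrite e mul0r => /eqP; rewrite oner_eq0.
Qed.


Variable g : gT.
Hypothesis Cg : g \in C.
Hypothesis genC : forall x, x \in C -> exists k, x = (g ^+ k)%g.
Hypothesis hq : [pchar K].-nat #|C|.

Lemma eps_stab d S : d \in C -> sigf d S = S -> eps d S = 1.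
Proof.
move=> Cd hS.
have hs : forall k, sigf (d ^+ k)%g S = S.
  by elim=> [|k IH]; rewrite ?expg0 ?sigf1 // expgSr sigfM ?groupX // IH.
have he : forall k, eps (d ^+ k)%g S = eps d S ^+ k.
  elim=> [|k IH]; first by rewrite expg0 eps1 expr0.
  by rewrite expgSr eps_cocycle ?groupX // IH hs exprSr.
apply: (root1q hq (cardG_gt0 C)); by rewrite -he expg_cardG // eps1.
Qed.

Local Notation tg := (tau g).

Lemma tau_exp k : tau (g ^+ k)%g = (tg ^+ k)%g.
Proof.
elim: k => [|k IH]; first by rewrite !expg0 tau1.
by rewrite !expgSr tauM ?groupX // IH.
Qed.

Lemma tau_iter k i : tau (g ^+ k)%g i = iter k tg i.
Proof. by rewrite tau_exp permX. Qed.

Definition delta i := eps (g ^+ findex tg (froot tg i) i)%g (enum_val (froot tg i)).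

Lemma sym_tg : connect_sym (frel tg).
Proof. exact: fconnect_sym (@perm_inj _ tg). Qed.

Lemma delta_step i : delta (tg i) = eps g (enum_val i) * delta i.
Proof.
have rr : froot tg (tg i) = froot tg i.
  by symmetry; apply/(fingraph.rootP sym_tg); exact: fconnect1.
set r := froot tg i.
have ci : fconnect tg r i by rewrite sym_tg; exact: connect_root.
set k := findex tg r i.
have hk : (k < fingraph.order tg r)%N by exact: findex_max.
have ei : iter k tg r = i by exact: iter_findex.
have ecoc : eps (g ^+ k.+1)%g (enum_val r) = delta i * eps g (enum_val i).
  rewrite expgSr eps_cocycle ?groupX // -tauE tau_iter ei.
  by rewrite /delta -/r.
rewrite [delta (tg i)]/delta rr.
have [lt|eq] : (k.+1 < fingraph.order tg r)%N \/ k.+1 = fingraph.order tg r by lia.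
  have -> : findex tg r (tg i) = k.+1 by rewrite -ei -iterS findex_iter.
  by rewrite ecoc mulrC.
have tgi : tg i = r by rewrite -ei -iterS eq iter_order //; exact: perm_inj.
rewrite tgi findex0 expg0 eps1 mulrC -ecoc eq eps_stab ?groupX //.
by rewrite -tauE tau_iter iter_order //; exact: perm_inj.
Qed.

Lemma delta_tau x i : x \in C -> delta (tau x i) = eps x (enum_val i) * delta i.
Proof.
move=> /genC[a ->]; elim: a => [|a IH]; first by rewrite expg0 tau1 perm1 eps1 mul1r.
rewrite expgSr tauM ?groupX // permM delta_step IH tauE eps_cocycle ?groupX //.
by rewrite mulrA [_ * eps _ _]mulrC.
Qed.

Lemma delta_neq0 i : delta i != 0.
Proof. by rewrite /delta eps_unit // groupX. Qed.

Definition Pf x : 'M[K]_#|{: KS}| := perm_mx (tau x).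

Lemma perm_mxE' m (s : {perm 'I_m}) i j : (perm_mx s : 'M[K]_m) i j = (s i == j)%:R.
Proof. by rewrite /perm_mx !mxE. Qed.

Lemma isoLP : isoI C (ext_fam n (fun x => regular_repr K C x)) Pf.
Proof.
exists (diag_mx (\row_i (delta i)^-1)), (diag_mx (\row_i delta i)); split.
- apply/matrixP => i j; rewrite mul_mx_diag !mxE.
  case: eqP => [<-|]; last by rewrite !mulr0n mul0r.
  by rewrite !mulr1n mulVf // delta_neq0.
- apply/matrixP => i j; rewrite mul_mx_diag !mxE.
  case: eqP => [<-|]; last by rewrite !mulr0n mul0r.
  by rewrite !mulr1n mulfV // delta_neq0.
- move=> x Cx; apply/matrixP => i j; rewrite mul_mx_diag mul_diag_mx mxE.
  rewrite /ext_fam mxE -[regular_repr K C x]/(Rr x) (L_entry _ _ Cx) !mxE /Pf.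
  case: eqP => [<-|]; last by rewrite !mul0r mulr0.
  rewrite delta_tau // invfM mul1r mulr1 mulrA mulfV ?mul1r //.
  exact: eps_unit.
Qed.


Lemma tau_g_exp : (tg ^+ #|C|)%g = 1%g.
Proof. by rewrite -tau_exp expg_cardG // tau1. Qed.

Lemma perm_mx_exp m (s : {perm 'I_m}) k : (perm_mx (s ^+ k)%g : 'M[K]_m) = perm_mx s ^+ k.
Proof.
elim: k => [|k IH]; first by rewrite expg0 expr0 perm_mx1.
by rewrite expgSr exprSr perm_mxM IH mulmxE.
Qed.

Lemma Good_P : Good C g #|C| Pf.
Proof.
split; last by rewrite /Pf -perm_mx_exp tau_g_exp perm_mx1.
move=> x /genC[k ->]; exists k; by rewrite /Pf -perm_mx_exp tau_exp.
Qed.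

Lemma permP_module : perm_module C Pf.
Proof. exists tau; split=> //; exact: tauM. Qed.

Lemma order_dvd (T : finType) (f : T -> T) (x : T) N :
  injective f -> iter N f x = x -> (fingraph.order f x %| N)%N.
Proof.
move=> finj hN; set m := fingraph.order f x.
have hm : forall a, iter (a * m) f x = x.
  elim=> [|a IH] //; by rewrite mulSn iterD IH iter_order.
have hr : iter (N %% m) f x = x.
  by move: hN; rewrite {1}(divn_eq N m) addnC iterD hm.
have : findex f x (iter (N %% m) f x) = (N %% m)%N.
  by apply: findex_iter; rewrite ltn_mod fingraph.order_gt0.
rewrite hr findex0 => /esym/eqP; rewrite /dvdn.
done.
Qed.

Lemma orderR0 r : tg r != r -> ((fingraph.order tg r)%:R : K) = 0.
Proof.
move=> hr.
have dm : (fingraph.order tg r %| #|C|)%N.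
  apply: order_dvd; first exact: perm_inj.
  by rewrite -permX tau_g_exp perm1.
have pm : [pchar K].-nat (fingraph.order tg r) by apply: pnat_dvd dm hq.
have m1 : (1 < fingraph.order tg r)%N.
  rewrite ltn_neqAle fingraph.order_gt0 andbT; apply: contra hr => /eqP e.
  by have := iter_order (@perm_inj _ tg) r; rewrite -e /= => ->.
have pc : pdiv (fingraph.order tg r) \in [pchar K] by rewrite (pnatPpi pm) ?pi_pdiv.
by apply/eqP; rewrite -(dvdn_pcharf pc) pdiv_dvd.
Qed.


Lemma rho_exp t : rho (g ^+ t)%g = (rho g ^+ t)%g.
Proof.
elim: t => [|t IH]; first by rewrite !expg0 rho1.
by rewrite !expgSr rhoM ?groupX // IH.
Qed.

Lemma fixed_nq i : tg i = i -> (n == 0%N) || (n == #|C|).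
Proof.
move=> hi.
have hS : sigf g (enum_val i) = enum_val i by rewrite -tauE hi.
set S := enum_val i in hS *.
have hA : [set rho g k | k in val S] = val S by rewrite -[RHS](congr1 val hS).
have cl : forall t k, k \in val S -> iter t (rho g) k \in val S.
  elim=> [|t IH] k kS //=; rewrite -hA; apply: imset_f; exact: IH.
have cn := eqP (valP S).
case: (set_0Vmem (val S)) => [A0 | [k kS]].
  by rewrite -cn A0 cards0.
apply/orP; right; rewrite -cn.
have -> : val S = setT.
  apply/setP => j; rewrite inE.
  have Cy : ((enum_val k)^-1 * enum_val j)%g \in C by rewrite groupM ?groupV // enum_valP.
  have [t ht] := genC Cy.
  have -> : j = rho (g ^+ t)%g k.
    by rewrite rhoE ?groupX // -ht mulKVg gring_valK.
  by rewrite rho_exp permX cl.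
by rewrite cardsT card_ord.
Qed.

Lemma kf_step i : (forall j, tg j != j) -> let kf j := findex tg (froot tg j) j in
  ((kf (tg i))%:R - (kf i)%:R : K) = 1.
Proof.
move=> nf kf.
have rr : froot tg (tg i) = froot tg i.
  by symmetry; apply/(fingraph.rootP sym_tg); exact: fconnect1.
rewrite /kf rr.
set r := froot tg i.
have ci : fconnect tg r i by rewrite sym_tg; exact: connect_root.
set k := findex tg r i.
have hk : (k < fingraph.order tg r)%N by exact: findex_max.
have ei : iter k tg r = i by exact: iter_findex.
have [lt|eq] : (k.+1 < fingraph.order tg r)%N \/ k.+1 = fingraph.order tg r by lia.
  have -> : findex tg r (tg i) = k.+1 by rewrite -ei -iterS findex_iter.
  by rewrite -addn1 natrD addrAC subrr add0r.
have tgi : tg i = r by rewrite -ei -iterS eq iter_order //; exact: perm_inj.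
rewrite tgi findex0 sub0r.
have h0 := orderR0 (nf r); rewrite -eq -addn1 natrD in h0.
by apply: (addrI (k%:R)); rewrite subrr h0.
Qed.


Lemma permmx_col m (s : {perm 'I_m}) (w : 'rV[K]_m) j :
  (w *m perm_mx s) 0 j = w 0 (s^-1 j)%g.
Proof. by rewrite -[s in perm_mx s]invgK -col_permE mxE. Qed.

Lemma nofix_ker : ~~ ((n == 0%N) || (n == #|C|)) -> (kermx (Nm g Pf) <= Nm g Pf)%MS.
Proof.
move=> h.
have nf : forall i, tg i != i by move=> i; apply/eqP => /fixed_nq; rewrite (negbTE h).
apply/row_subP => i0; set w := row i0 (kermx _).
have wN : w *m Nm g Pf = 0 by rewrite /w -row_mul mulmx_ker row0.
clearbody w.
have wP : w *m Pf g = w.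
  by move/eqP: wN; rewrite /Nm mulmxBr mulmx1 subr_eq0 => /eqP.
have wc : forall i, w 0 (tg i) = w 0 i.
  by move=> i; rewrite -{1}wP permmx_col permK.
pose kf j := findex tg (froot tg j) j.
pose u : 'rV[K]_#|{: KS}| := \row_i (- (kf i)%:R * w 0 i).
have uN : u *m Nm g Pf = w.
  apply/rowP => j; rewrite /Nm mulmxBr mulmx1 mxE /Pf permmx_col [(- u) 0 j]mxE !mxE.
  have [i ->] : exists i, j = tg i by exists (tg^-1 j)%g; rewrite permKV.
  rewrite permK wc.
  rewrite -mulrBl opprK addrC.
  by have := kf_step i nf; rewrite -/kf => ->; rewrite mul1r.
by rewrite -uN submxMl.
Qed.


Lemma phi_P : phi g Pf = ((n == 0%N) || (n == #|C|))%:Z.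
Proof.
case: (boolP ((n == 0%N) || (n == #|C|))) => h; last by rewrite (phi_ker0 Cg hq (cardG_gt0 C) (nofix_ker h)).
have uniqS : forall S T : KS, S = T.
  move=> S T; apply: val_inj; case/orP: h => /eqP hn.
    by rewrite (cards0_eq (etrans (eqP (valP S)) hn)) (cards0_eq (etrans (eqP (valP T)) hn)).
  have full : forall U : KS, val U = setT.
    by move=> U; apply/eqP; rewrite eqEcard subsetT cardsT card_ord (eqP (valP U)) hn leqnn.
  by rewrite !full.
have tg1 : tg = 1%g by apply/permP => i; rewrite perm1; apply: enum_val_inj; exact: uniqS.
have N0 : Nm g Pf = 0 by rewrite /Nm /Pf tg1 perm_mx1 subrr.
have [S0 _] : exists S0 : KS, True.
  case/orP: h => /eqP hn.
    have e : #|(set0 : {set 'I_#|C|})| == n by rewrite cards0 hn.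
    by exists (exist (fun A : {set 'I_#|C|} => #|A| == n) _ e).
  have e : #|[set: 'I_#|C|]| == n by rewrite cardsT card_ord hn.
  by exists (exist (fun A : {set 'I_#|C|} => #|A| == n) _ e).
have c1 : #|{: KS}| = 1%N.
  by apply/eqP/card1P; exists S0 => S; rewrite !inE (uniqS S S0) eqxx.
by rewrite /phi N0 mul0mx mxrank0 c1.
Qed.

End Conc.

Local Close Scope ring_scope.

Theorem lemma4p3 (p : nat) (K : fieldType) (gT : finGroupType) (C : {group gT})
    (n : nat) :
  (p \in [pchar K])%R -> cyclic C -> (p.-group C)%g ->
  let Vq := fun x => regular_repr K C x in
  let L := ext_fam n Vq in
  in_PKC C L /\
  (exists s, is_decomposition C L s) /\
  (forall s, is_decomposition C L s ->
     count_V1 s = ((n == 0) || (n == #|C|))%N :> nat).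
Proof.
move=> hp cyc pg Vq L.
have [g eC] := cyclicP cyc.
have Cg : g \in C by rewrite eC cycle_id.
have genC : forall x, x \in C -> exists k, x = (g ^+ k)%g.
  by move=> x; rewrite eC => /cycleP.
have hq : ([pchar K])%R.-nat #|C| by rewrite (eq_pnat _ (pcharf_eq hp)).
have isoLP' : isoI C L (Pf K C n) := isoLP n Cg genC hq.
split.
  exists #|{: ksub #|C| n}|, 0%N, (Pf K C n), (fun _ => perm_mx 1%g).
  split; first exact: (permP_module K C n).
    by exists (fun _ => 1%g); split => // x y _ _; rewrite mulg1.
  apply/isoIP; apply: isoI_trans isoLP'.
  exact: isoI_sym (isoI_add0 C L _).
split; first exact: decomp_exists.
move=> s [hs /isoIP hiso].
have GL : Good C g #|C| L := Good_iso Cg isoLP' (Good_P K n Cg genC).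
have GS := Good_iso Cg (isoI_sym hiso) GL.
have e := phi_sum Cg hq (cardG_gt0 C) hs GS.
rewrite -(phi_iso Cg hiso) (phi_iso Cg isoLP') (phi_P n Cg genC hq) in e.
by case: e.
Qed.
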